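(* Let $K$ be an alphabet space and $\sigma:K\to K^+$ a primitive generalized substitution. Then for any two letters $a,b\in K$, $\mathcal L(\sigma,a)=\mathcal L(\sigma,b)=\mathcal L(\sigma)$.
   Context: An alphabet space is a compact zero-dimensional metric space $K$ with at least two points; $K^n$ is the set of words of length $n$ with the product topology, $K^+=\bigcup_{n\ge1}K^n$. A generalized substitution is a map $\sigma:K\to K^+$ with $a\mapsto|\sigma(a)|$ continuous and, for each $j$, $a\mapsto$ ($j$-th letter of $\sigma(a)$) continuous on $\{a:|\sigma(a)|\ge j\}$; it is extended to words by concatenation. $\sigma$ is primitive if for every nonempty open $V\subset K$ there is $j$ such that for all $a\in K$ and $k\ge j$ some letter of $\sigma^k(a)$ lies in $V$. $\mathcal L(\sigma,a)$ is the set of words $w\in K^+$ that are subwords of $\sigma^j(a)$ for some $j\in\mathbb N$, or are limits in $K^{|w|}$ of such words; $\mathcal L(\sigma)=\bigcup_{a\in K}\mathcal L(\sigma,a)$. *)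

(* Defs.v *)
From HB Require Import structures.
From mathcomp Require Import all_boot all_order all_algebra.
From mathcomp Require Import all_classical all_reals all_analysis.
Set Implicit Arguments. Unset Strict Implicit. Unset Printing Implicit Defensive.
Import Order.TTheory GRing.Theory Num.Theory.
Local Open Scope classical_set_scope.

Definition zero_dim (T : topologicalType) : Prop :=
  forall (x : T) (U : set T), nbhs x U ->
    exists V : set T, [/\ clopen V, V x & V `<=` U].

Definition alphabet_space (R : realType) (K : metricType R) : Prop :=
  [/\ compact [set: K], zero_dim K & exists a b : K, a != b].

Definition subst_word (K : Type) (sigma : K -> seq K) (w : seq K) : seq K :=
  flatten (map sigma w).

Definition subst_iter (K : Type) (sigma : K -> seq K) (k : nat) (a : K) : seq K :=
  iter k (subst_word sigma) [:: a].

Definition gen_subst (K : topologicalType) (sigma : K -> seq K) : Prop :=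
  [/\ (forall a, 0 < size (sigma a))%N,
      (* a |-> |sigma a| continuous into the discrete space N *)
      (forall a : K, \forall x \near a, size (sigma x) = size (sigma a)) &
      (forall (j : nat) (d : K),
         {within [set a | (j < size (sigma a))%N],
            continuous (fun a => nth d (sigma a) j)})].

Definition primitive (K : topologicalType) (sigma : K -> seq K) : Prop :=
  forall V : set K, open V -> V !=set0 ->
    exists j : nat, forall (a : K) (k : nat), (j <= k)%N ->
      exists2 x, x \in subst_iter sigma k a & V x.

Definition word_of (K : Type) (n : nat) (f : 'I_n -> K) : seq K :=
  [seq f i | i <- enum 'I_n].

(* L(sigma, a): nonempty words that are subwords (factors) of some sigma^j(a),
   or limits in K^n (product topology) of such words *)
Definition lang_at (K : topologicalType) (sigma : K -> seq K) (a : K) : set (seq K) :=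
  [set w | exists (n : nat) (f : 'I_n -> K),
     [/\ (0 < n)%N, w = word_of f &
         closure [set g : {ptws 'I_n -> K} |
                   exists j : nat, infix (word_of g) (subst_iter sigma j a)]
                 (f : {ptws 'I_n -> K})]].

Definition lang (K : topologicalType) (sigma : K -> seq K) : set (seq K) :=
  \bigcup_(a in [set: K]) lang_at sigma a.

(* Main.v *)
Require Import Defs.
From HB Require Import structures.
From mathcomp Require Import all_boot all_order all_algebra.
From mathcomp Require Import all_classical all_reals all_analysis.
From mathcomp Require Import zify.
Local Open Scope classical_set_scope.
Set Implicit Arguments.

Lemma ptws_cvg (T : topologicalType) (n : nat) (F : set_system {ptws 'I_n -> T})
  (f : {ptws 'I_n -> T}) : Filter F ->
  (forall i, (fun g : {ptws 'I_n -> T} => g i) @ F --> f i) -> F --> f.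
Proof.
move=> FF H.
apply/cvg_sup => i.
apply/cvg_image => //.
  by apply/seteqP; split => // y _; exists (fun _ => y).
move=> W /= hW.
exists ((fun g : {ptws 'I_n -> T} => g i) @^-1` W); first exact: H.
apply: image_preimage.
by apply/seteqP; split => // y _; exists (fun _ => y).
Qed.

Lemma near_cont (T U : topologicalType) (f g : T -> U) (a : T) :
  (\forall x \near a, f x = g x) -> {for a, continuous g} -> {for a, continuous f}.
Proof.
move=> fg gc.
have fa : f a = g a := nbhs_singleton fg.
move=> A /=; rewrite fa => /gc /= gA.
by apply: filterS2 fg gA => x /= ->.
Qed.

Definition wcont (T : topologicalType) (F : T -> seq T) (a : T) :=
  (\forall x \near a, size (F x) = size (F a)) /\
  (forall (d : T) (i : nat), (i < size (F a))%N ->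
     {for a, continuous (fun x => nth d (F x) i)}).
Arguments wcont {T}.

Lemma wcont_near (T : topologicalType) (F G : T -> seq T) (a : T) :
  (\forall x \near a, F x = G x) -> wcont G a -> wcont F a.
Proof.
move=> FG [sG cG].
have Fa : F a = G a := nbhs_singleton FG.
split.
  by apply: filterS2 FG sG => x -> ->; rewrite Fa.
move=> d i; rewrite Fa => /(cG d) h; apply: near_cont h.
by apply: filterS FG => x ->.
Qed.

Lemma wcont_single (T : topologicalType) (a : T) : wcont (fun x => [:: x]) a.
Proof.
split; first by apply: nearW.
by move=> d [|i] // _; exact: cvg_id.
Qed.

Lemma wcont_nil (T : topologicalType) (a : T) : wcont (fun _ => [::]) a.
Proof. by split; first by apply: nearW. Qed.

Lemma wcont_cat (T : topologicalType) (F G : T -> seq T) (a : T) :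
  wcont F a -> wcont G a -> wcont (fun x => F x ++ G x) a.
Proof.
move=> [sF cF] [sG cG]; split.
  by apply: filterS2 sF sG => x e1 e2; rewrite !size_cat e1 e2.
move=> d i; rewrite size_cat => hi.
case: (ltnP i (size (F a))) => hiF.
  apply: near_cont (cF d i hiF).
  by apply: filterS sF => x ex; rewrite nth_cat ex hiF.
apply: near_cont (cG d (i - size (F a))%N _); last by lia.
by apply: filterS sF => x ex; rewrite nth_cat ex ltnNge hiF.
Qed.

Lemma wcont_sigma (T : topologicalType) (sigma : T -> seq T) :
  gen_subst sigma -> forall y, wcont sigma y.
Proof.
move=> [_ Hs Hc] y; split; first exact: Hs.
move=> d i hi.
have := Hc i d; move/subspace_continuousP => /(_ y hi).
rewrite within_interior //.
by apply: filterS (Hs y) => x /= ->.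
Qed.

Lemma wcont_comp (T : topologicalType) (sigma : T -> seq T) (h : T -> T) (a : T) :
  (forall y, wcont sigma y) -> {for a, continuous h} ->
  wcont (fun x => sigma (h x)) a.
Proof.
move=> HG hc; have [sS cS] := HG (h a); split.
  exact: (hc _ sS).
move=> d i hi.
exact: (continuous_comp hc (cS d i hi)).
Qed.

Lemma wcont_flat (T : topologicalType) (sigma : T -> seq T) (F : T -> seq T) (a : T) :
  (forall y, wcont sigma y) -> wcont F a ->
  wcont (fun x => flatten (map sigma (F x))) a.
Proof.
move=> HG [sF cF]; set n := size (F a).
have key : forall ms, all (fun m => m < n)%N ms ->
    wcont (fun x => flatten [seq sigma (nth a (F x) m) | m <- ms]) a.
  elim => [|m ms IH] /=; first by move=> _; exact: wcont_nil.
  move=> /andP[hm hms].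
  exact: (wcont_cat (wcont_comp HG (cF a m hm)) (IH hms)).
apply: wcont_near (key (iota 0 n) _).
  apply: filterS sF => x ex.
  by rewrite -[in LHS](mkseq_nth a (F x)) ex /mkseq -map_comp.
by apply/allP => m; rewrite mem_iota add0n => /andP[].
Qed.

Lemma wcont_iter (T : topologicalType) (sigma : T -> seq T) (j : nat) (a : T) :
  (forall y, wcont sigma y) -> wcont (subst_iter sigma j) a.
Proof.
move=> HG; elim: j a => [|j IH] a; first exact: wcont_single.
exact: (wcont_flat HG (IH a)).
Qed.

Lemma subst_word_cat (T : Type) (sigma : T -> seq T) s1 s2 :
  subst_word sigma (s1 ++ s2) = subst_word sigma s1 ++ subst_word sigma s2.
Proof. by rewrite /subst_word map_cat flatten_cat. Qed.

Lemma iter_flat (T : Type) (sigma : T -> seq T) j w :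
  iter j (subst_word sigma) w = flatten (map (subst_iter sigma j) w).
Proof.
elim: j w => [|j IH] w.
  by elim: w => //= x w IHw; rewrite -IHw.
rewrite iterS IH.
elim: w => // x w IHw.
by rewrite /= subst_word_cat IHw.
Qed.

Lemma infix_flat (T : eqType) (F : T -> seq T) x s :
  x \in s -> infix (F x) (flatten (map F s)).
Proof.
elim: s => // y s IH; rewrite in_cons => /orP[/eqP->|hx] /=.
  exact: infix_catr (infix_refl _).
exact: infix_catl (IH hx).
Qed.

Lemma word_of_nth (T : Type) n (a : T) (t : seq T) p :
  (p + n <= size t)%N ->
  word_of (fun i : 'I_n => nth a t (p + i)) = take n (drop p t).
Proof.
move=> h; rewrite /word_of.
rewrite (@eq_map _ _ _ ((fun i : nat => nth a t (p + i)) \o val)) //.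
rewrite map_comp val_enum_ord.
apply: (@eq_from_nth _ a).
  rewrite size_map size_iota size_take size_drop.
  case: ltnP => //; lia.
move=> i; rewrite size_map size_iota => hi.
rewrite (nth_map 0) ?size_iota // nth_iota // nth_take // nth_drop.
by rewrite add0n.
Qed.

Lemma key_closure (T : topologicalType) (sigma : T -> seq T) n (f : 'I_n -> T) a b j :
  gen_subst sigma -> primitive sigma ->
  infix (word_of f) (subst_iter sigma j a) ->
  closure [set g : {ptws 'I_n -> T} |
     exists j : nat, infix (word_of g) (subst_iter sigma j b)] (f : {ptws 'I_n -> T}).
Proof.
move=> HGs HP /infixP [s1 [s2 E]].
have HG := wcont_sigma HGs.
set p := size s1.
set s := subst_iter sigma j a in E.
have sizew : size (word_of f) = n by rewrite size_map size_enum_ord.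
have hsize : (p + n <= size s)%N by rewrite E !size_cat sizew addnA leq_addr.
have nthE : forall i : 'I_n, f i = nth a s (p + i).
  move=> i; rewrite E nth_cat ltnNge leq_addr /= addKn nth_cat sizew ltn_ord.
  by rewrite /word_of (nth_map i) ?size_enum_ord // nth_ord_enum.
pose g : T -> {ptws 'I_n -> T} :=
  fun x => fun i : 'I_n => nth a (subst_iter sigma j x) (p + i).
have ga : g a = f by apply: functional_extensionality_dep => i; rewrite nthE.
have [sW cW] := wcont_iter j a HG.
have gc : {for a, continuous g}.
  apply: ptws_cvg => i.
  apply: (cW a (p + i)%N).
  by apply: leq_trans hsize; rewrite ltn_add2l.
move=> B hB; rewrite -ga in hB.
have hB' := gc _ hB.
pose P := g @^-1` B `&` [set x | size (subst_iter sigma j x) = size s].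
have nP : nbhs a P by apply: filterI.
have [k0 Hk] := HP (P°) (@open_interior _ P)
  (ex_intro _ a (nbhs_singleton (nbhs_interior nP))).
have [x xin /interior_subset [Bx sx]] := Hk b k0 (leqnn _).
exists (g x); split => //.
exists (j + k0)%N.
apply: (@infix_trans _ (subst_iter sigma j x)).
  apply/infixP; exists (take p (subst_iter sigma j x)),
    (drop (p + n) (subst_iter sigma j x)).
  rewrite word_of_nth; last by rewrite sx.
  by rewrite addnC -drop_drop !cat_take_drop.
have -> : subst_iter sigma (j + k0) b =
  flatten (map (subst_iter sigma j) (subst_iter sigma k0 b)).
  by rewrite {1}/subst_iter iterD iter_flat.
exact: infix_flat.
Qed.

Lemma sub_lang (T : topologicalType) (sigma : T -> seq T) a b :
  gen_subst sigma -> primitive sigma ->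
  lang_at sigma a `<=` lang_at sigma b.
Proof.
move=> HG HP w [n [f [n0 -> cl]]]; exists n, f; split => //.
move: cl; rewrite [X in _ -> X _](closure_id _).1; last exact: closed_closure.
apply: closureS => g [j hj].
exact: (@key_closure T sigma n g a b j HG HP hj).
Qed.

Unset Implicit Arguments.

Theorem mainTheorem18 (R : realType) (K : metricType R) (sigma : K -> seq K) :
  alphabet_space K -> gen_subst sigma -> primitive sigma ->
  forall a b : K, lang_at sigma a = lang_at sigma b /\ lang_at sigma b = lang sigma.
Proof.
move=> _ HG HP a b; split.
  by apply/seteqP; split; apply: sub_lang.
apply/seteqP; split.
  by move=> w h; exists b.
by move=> w [c _ h]; exact: (@sub_lang K sigma c b HG HP w h).
Qed.
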